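(* Let $k$ be a field of characteristic $0$, $m\ge 2$, and let $F_1,\dots,F_m\in k[X_1,\dots,X_m]$ be such that the determinant of the Jacobian matrix $\left(\partial F_i/\partial X_j\right)_{1\le i,j\le m}$ is a nonzero element of $k$. Then the system $$F_i(\mathcal{U}_1(t),\dots,\mathcal{U}_m(t))=tX_i+(1-t)F_i(X_1,\dots,X_m)\quad (1\le i\le m),$$ with initial conditions $\mathcal{U}_i(0)=X_i$ for $1\le i\le m$, has a unique solution $\mathcal{U}_1(t),\dots,\mathcal{U}_m(t)\in k[X_1,\dots,X_m][[t]]$, with $\mathcal{U}_i(t)=X_i+\sum_{j\ge1}u_{i,j}(X_1,\dots,X_m)t^j$ where $u_{i,j}\in k[X_1,\dots,X_m]$.
   Context: $k[X_1,\dots,X_m][[t]]$ denotes the ring of formal power series in $t$ with coefficients in $k[X_1,\dots,X_m]$; evaluation at $t=0$ means taking the constant term. *)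

(* Defs.v *)
From HB Require Import structures.
From mathcomp Require Import all_boot all_order all_algebra.
From mathcomp Require Import mpoly.
Set Implicit Arguments. Unset Strict Implicit. Unset Printing Implicit Defensive.
Import GRing.Theory.
Local Open Scope ring_scope.

(* A formal power series in t with coefficients in k[X_1..X_m] is represented
   by its coefficient sequence  nat -> {mpoly k[m]}  (coefficient of t^n). *)
Definition fps (k : fieldType) (m : nat) := nat -> {mpoly k[m]}.

Definition fps_trunc (k : fieldType) (m : nat) (n : nat) (U : fps k m)
  : {poly {mpoly k[m]}} := \poly_(j < n.+1) U j.

(* Coefficient of t^n in F(U_1(t), ..., U_m(t)) for a polynomial F in k[X_1..X_m]
   and power series U_1..U_m : since coefficient n of a polynomial expression
   in power series only depends on their coefficients of index <= n, it is the
   coefficient of t^n of F evaluated at the truncations of the U_j. *)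
Definition fps_comp_coef (k : fieldType) (m : nat) (F : {mpoly k[m]})
  (U : 'I_m -> fps k m) (n : nat) : {mpoly k[m]} :=
  (mmap (fun c : k => (c%:MP)%:P) (fun j => fps_trunc n (U j)) F)`_n.

Definition jacobian (k : fieldType) (m : nat) (F : 'I_m -> {mpoly k[m]})
  : 'M[{mpoly k[m]}]_m := \matrix_(i < m, j < m) (F i)^`M(j).

(* Coefficients of the power series  t X_i + (1 - t) F_i  in t. *)
Definition rhs_coef (k : fieldType) (m : nat) (F : 'I_m -> {mpoly k[m]})
  (i : 'I_m) (n : nat) : {mpoly k[m]} :=
  match n with
  | 0 => F i
  | 1 => 'X_i - F i
  | _ => 0
  end.

Definition is_solution (k : fieldType) (m : nat) (F : 'I_m -> {mpoly k[m]})
  (U : 'I_m -> fps k m) : Prop :=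
  (forall i : 'I_m, U i 0%N = 'X_i) /\
  (forall (i : 'I_m) (n : nat), fps_comp_coef (F i) U n = rhs_coef F i n).

(* Main.v *)
Require Import Defs.
From HB Require Import structures.
From mathcomp Require Import all_boot all_order all_algebra.
From mathcomp Require Import mpoly.
Import GRing.Theory.
Local Open Scope ring_scope.

From mathcomp Require Import ring.
From Stdlib Require Import FunctionalExtensionality.

Section Closure.
Variables (R : comNzRingType) (n : nat).
Lemma mpoly_closure (P : {mpoly R[n]} -> Prop) :
  (forall c, P c%:MP) -> (forall i, P 'X_i) ->
  (forall p q, P p -> P q -> P (p + q)) ->
  (forall p q, P p -> P q -> P (p * q)) -> forall p, P p.
Proof.
move=> PC PX PD PM p; elim/mpolyind: p => [|c mo p _ _ Hp].
  by rewrite -mpolyC0.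
apply: (PD) => //; rewrite -mul_mpolyC; apply: (PM) => //.
rewrite mpolyXE_id; apply: (big_ind P); [by rewrite -mpolyC1 | exact: PM | move=> i _]. elim: (mo i) => [|e IH]; first by rewrite expr0 -mpolyC1.
by rewrite exprS; apply: (PM).
Qed.
End Closure.

Lemma mderivXU (R : ringType) n (i j : 'I_n) :
  ('X_j : {mpoly R[n]})^`M(i) = (j == i)%:R.
Proof.
rewrite mderivX mnm1E; case: eqP => [->|_]; last by rewrite scale0r.
have -> : (U_(i) - U_(i) = 0)%MM by apply/mnmP => l; rewrite mnmBE subnn mnm0E.
by rewrite mpolyX0 scale1r.
Qed.

Section Taylor.
Variables (k : fieldType) (m : nat).
Local Notation R := {mpoly k[m]}.
Local Notation S := {poly R}.
Variables (g : {rmorphism k -> S}) (P : 'I_m -> S) (d : 'I_m -> R) (N : nat).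
Let P' j := P j + (d j)%:P * 'X^N.
Let A G := mmap g P G.
Let A' G := mmap g P' G.
Let B (G : R) := \sum_(j < m) A (G^`M(j)) * (d j)%:P.

Lemma mmapXi (h : 'I_m -> S) i : mmap g h 'X_i = h i.
Proof. by rewrite mmapX mmap1U. Qed.

Lemma mmapM (h : 'I_m -> S) p q : mmap g h (p * q) = mmap g h p * mmap g h q.
Proof. exact: (mmap_is_multiplicative h g).1. Qed.

Lemma taylor G : exists Q, A' G = A G + 'X^N * B G + 'X^N * 'X^N * Q.
Proof.
elim/mpoly_closure: G.
- move=> c; exists 0; rewrite /A' /A /B !mmapC big1 ?mulr0 ?addr0 // => j _.
  by rewrite mderivC /A raddf0; apply: mul0r.
- move=> i; exists 0; rewrite /A' /A /B !mmapXi mulr0 addr0 /P'.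
  rewrite (bigD1 i) //= big1 ?addr0; last first.
    by move=> j /negbTE ji; rewrite mderivXU eq_sym ji /A rmorph_nat mulr0n mul0r.
  by rewrite mderivXU eqxx /A rmorph1 mul1r mulrC.
- move=> p q [Q1 E1] [Q2 E2]; exists (Q1 + Q2).
  rewrite /A' /A !mmapD -/(A' p) -/(A' q) -/(A p) -/(A q) E1 E2.
  have -> : B (p + q) = B p + B q.
    by rewrite /B -big_split; apply: eq_bigr => j _; rewrite mderivD /A mmapD mulrDl.
  ring.
- move=> p q [Q1 E1] [Q2 E2].
  have HB : B (p * q) = B p * A q + A p * B q.
    rewrite /B mulr_suml mulr_sumr -big_split; apply: eq_bigr => j _.
    rewrite mderivM /A mmapD !mmapM -/(A p) -/(A q) /=. ring.
  exists (B p * B q + Q1 * A q + A p * Q2 + 'X^N * (B p * Q2 + Q1 * B q) + 'X^N * 'X^N * Q1 * Q2).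
  rewrite /A' /A !mmapM -/(A' p) -/(A' q) -/(A p) -/(A q) E1 E2 HB.
  ring.
Qed.
End Taylor.

Section Coef.
Variables (k : fieldType) (m : nat).
Local Notation R := {mpoly k[m]}.
Local Notation S := {poly R}.

Lemma mmap_coef0 (g : {rmorphism k -> S}) (h : 'I_m -> S) :
  (forall c, (g c)`_0 = c%:MP) -> (forall j, (h j)`_0 = 'X_j) ->
  forall G, (mmap g h G)`_0 = G.
Proof.
move=> Hg Hh; elim/mpoly_closure.
- by move=> c; rewrite mmapC Hg.
- by move=> i; rewrite mmapXi Hh.
- by move=> p q Ep Eq; rewrite mmapD coefD Ep Eq.
- by move=> p q Ep Eq; rewrite mmapM coef0M Ep Eq.
Qed.

Definition gk : {rmorphism k -> S} := (polyC \o (@mpolyC m k)).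

Lemma comp_coefE F (U : 'I_m -> fps k m) n :
  fps_comp_coef F U n = (mmap gk (fun j => fps_trunc n (U j)) F)`_n.
Proof. by []. Qed.

Lemma comp_coef0 F (U : 'I_m -> fps k m) :
  (forall j, U j 0%N = 'X_j) -> fps_comp_coef F U 0 = F.
Proof.
move=> HU; rewrite comp_coefE mmap_coef0 //.
  by move=> c; rewrite /gk /= coefC.
by move=> j; rewrite /fps_trunc coef_poly /= HU.
Qed.

Lemma comp_coef_ext F (U V : 'I_m -> fps k m) n :
  (forall j l, (l <= n)%N -> V j l = U j l) ->
  fps_comp_coef F V n = fps_comp_coef F U n.
Proof.
move=> H; rewrite !comp_coefE.
have -> : (fun j => fps_trunc n (V j)) = (fun j => fps_trunc n (U j)) => //.
by apply: functional_extensionality => j; apply: eq_poly => l Hl; apply: H.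
Qed.

Lemma comp_coef_diff F (U V : 'I_m -> fps k m) n :
  (0 < n)%N -> (forall j, U j 0%N = 'X_j) ->
  (forall j l, (l < n)%N -> V j l = U j l) ->
  fps_comp_coef F V n =
    fps_comp_coef F U n + \sum_(j < m) F^`M(j) * (V j n - U j n).
Proof.
move=> n0 HU HV.
have ET : (fun j => fps_trunc n (V j)) =
   (fun j => fps_trunc n (U j) + (V j n - U j n)%:P * 'X^n).
  apply: functional_extensionality => j; apply/polyP => l.
  rewrite coefD coefCM coefXn /fps_trunc !coef_poly.
  case: (ltngtP l n) => [ln|nl|->]; rewrite ?ltnS.
  - by rewrite ltnW // HV // mulr0 addr0.
  - by rewrite leqNgt nl mulr0 addr0.
  - by rewrite leqnn mulr1 addrC subrK.
rewrite !comp_coefE ET.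
have [Q ->] := @taylor k m gk (fun j => fps_trunc n (U j)) (fun j => V j n - U j n) n F.
rewrite !coefD -mulrA !coefXnM ltnn subnn n0 addr0; congr (_ + _).
rewrite coef_sum; apply: eq_bigr => j _; rewrite coefMC mmap_coef0 //.
  by move=> c; rewrite /gk /= coefC.
by move=> l; rewrite /fps_trunc coef_poly /= HU.
Qed.
End Coef.

Section Main.
Variables (k : fieldType) (m : nat) (F : 'I_m -> {mpoly k[m]}) (c : k).
Local Notation R := {mpoly k[m]}.
Hypothesis cnz : c != 0.
Hypothesis Hdet : \det (jacobian F) = c%:MP.
Let J := jacobian F.
Let adj := \adj J.

Lemma mx_assoc (A B : 'M[R]_m) (d : 'I_m -> R) i :
  \sum_(l < m) A i l * (\sum_(j < m) B l j * d j) = \sum_(j < m) (A *m B) i j * d j.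
Proof.
under eq_bigr => l _ do rewrite mulr_sumr.
rewrite exchange_big /=; apply: eq_bigr => j _.
by rewrite mxE mulr_suml; apply: eq_bigr => l _; rewrite mulrA.
Qed.

Lemma scalar_sum (a : R) (d : 'I_m -> R) i :
  \sum_(j < m) (a%:M : 'M[R]_m) i j * d j = a * d i.
Proof.
rewrite (bigD1 i) //= big1 ?addr0; first by rewrite mxE eqxx mulr1n.
by move=> j /negbTE ji; rewrite mxE eq_sym ji mulr0n mul0r.
Qed.

Lemma cinv : c^-1%:MP * c%:MP = 1 :> R.
Proof. by rewrite -rmorphM mulVf // rmorph1. Qed.

Lemma solve_lin (r : 'I_m -> R) l :
  \sum_(j < m) J l j * (c^-1%:MP * \sum_(p < m) adj j p * r p) = r l.
Proof.
under eq_bigr => j _ do rewrite mulrCA.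
rewrite -mulr_sumr mx_assoc /adj /J mul_mx_adj Hdet scalar_sum.
by rewrite mulrA cinv mul1r.
Qed.

Lemma inj_lin (d : 'I_m -> R) :
  (forall l, \sum_(j < m) J l j * d j = 0) -> forall i, d i = 0.
Proof.
move=> H i.
have : \sum_(l < m) adj i l * (\sum_(j < m) J l j * d j) = 0.
  by rewrite big1 // => l _; rewrite H mulr0.
rewrite mx_assoc /adj /J mul_adj_mx Hdet scalar_sum => /(congr1 (fun x => c^-1%:MP * x)).
by rewrite mulrA cinv mul1r mulr0.
Qed.

Definition vstep (S0 : 'I_m -> fps k m) (n : nat) (i : 'I_m) : R :=
  c^-1%:MP * \sum_(p < m) adj i p * (rhs_coef F p n - fps_comp_coef (F p) S0 n).

Fixpoint Sx (n : nat) : 'I_m -> fps k m :=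
  match n with
  | 0 => fun i l => if l == 0%N then 'X_i else 0
  | n'.+1 => fun i l => if l == n'.+1 then vstep (Sx n') n'.+1 i else Sx n' i l
  end.

Lemma Sx_big n i l : (n < l)%N -> Sx n i l = 0.
Proof.
elim: n l => [|n IH] l /= Hl; first by rewrite eqn0Ngt Hl.
by rewrite eqn_leq leqNgt Hl /= IH // ltnW.
Qed.

Lemma Sx_step n i l : (l <= n)%N -> Sx n.+1 i l = Sx n i l.
Proof. by move=> Hl /=; rewrite eqn_leq [(n.+1 <= l)%N]leqNgt ltnS Hl andbF. Qed.

Lemma Sx_mono n n' i l : (l <= n)%N -> (n <= n')%N -> Sx n' i l = Sx n i l.
Proof.
move=> Hl; elim: n' => [|n' IH]; first by rewrite leqn0 => /eqP ->.
rewrite leq_eqVlt => /orP [/eqP -> //|]; rewrite ltnS => Hn.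
by rewrite Sx_step ?IH // (leq_trans Hl).
Qed.

Lemma Sx0 n i : Sx n i 0%N = 'X_i.
Proof. by rewrite (@Sx_mono 0 n i 0). Qed.

Definition Usol : 'I_m -> fps k m := fun i l => Sx l i l.

Lemma Usol_Sx n i l : (l <= n)%N -> Usol i l = Sx n i l.
Proof. by move=> Hl; rewrite /Usol (@Sx_mono l n i l) // (@Sx_mono l l i l). Qed.

Lemma Usol_sol : is_solution F Usol.
Proof.
split; first by move=> i; rewrite /Usol Sx0.
move=> i [|n].
  by rewrite comp_coef0 // => j; rewrite /Usol Sx0.
rewrite (@comp_coef_diff k m (F i) (Sx n) Usol n.+1) //; last 2 first.
- by move=> j; rewrite Sx0.
- by move=> j l Hl; rewrite (@Usol_Sx n).
under eq_bigr => j _ do rewrite Sx_big // subr0 /Usol /= eqxx.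
have := solve_lin (fun p => rhs_coef F p n.+1 - fps_comp_coef (F p) (Sx n) n.+1) i.
rewrite /J /vstep => H.
rewrite [X in _ + X = _](_ : _ = rhs_coef F i n.+1 - fps_comp_coef (F i) (Sx n) n.+1).
  by rewrite addrC subrK.
by rewrite -H; apply: eq_bigr => j _; rewrite mxE.
Qed.

Lemma Usol_uniq V : is_solution F V -> forall i n, V i n = Usol i n.
Proof.
move=> [V0 Vn] i n; move: i; elim: n {-2}n (leqnn n) => [|n IH] l Hl i.
  by move: Hl; rewrite leqn0 => /eqP ->; rewrite V0 /Usol Sx0.
move: Hl; rewrite leq_eqVlt => /orP [/eqP ->|]; last by rewrite ltnS => /IH.
apply/eqP; rewrite -subr_eq0; apply/eqP; move: i.
apply: (@inj_lin (fun j => V j n.+1 - Usol j n.+1)) => p.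
have E := @comp_coef_diff k m (F p) Usol V n.+1 erefl.
have {E} := E (fun j => Sx0 0 j) (fun j l Hl => IH l Hl j).
rewrite !Vn (proj2 Usol_sol) => E.
have Hs : \sum_(j < m) (F p)^`M(j) * (V j n.+1 - Usol j n.+1) = 0.
  by apply: (@addrI _ (rhs_coef F p n.+1)); rewrite addr0 -E.
by rewrite -[RHS]Hs; apply: eq_bigr => j _; rewrite /J mxE.
Qed.
End Main.

Theorem theorem4p1 (k : fieldType) (m : nat) (F : 'I_m -> {mpoly k[m]}) :
  [pchar k] =i pred0 ->
  (2 <= m)%N ->
  (exists c : k, c != 0 /\ \det (jacobian F) = c%:MP) ->
  exists U : 'I_m -> fps k m,
    is_solution F U /\
    forall V : 'I_m -> fps k m, is_solution F V ->
      forall (i : 'I_m) (n : nat), V i n = U i n.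
Proof.
move=> _ _ [c [cnz Hdet]].
exists (@Usol k m F c); split; first exact: (@Usol_sol k m F c cnz Hdet).
by move=> V HV i n; apply: (@Usol_uniq k m F c cnz Hdet).
Qed.
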